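(* If $n>2$ and $n\equiv 2 \pmod 4$, then $IK_n$ is not a $G$-graph.
   Context: $K_n$ is the complete simple graph on $n$ vertices and $IK_n$ its incidence graph (the simple graph whose vertices are the vertices and edges of $K_n$, each edge adjacent exactly to its two end-points). For a group $G$ and a multiset $S$ of elements of $G$, $\Phi(G,S)$ is the multigraph whose vertex set is the union over the members $s$ of $S$ (with multiplicity) of the right cosets $\langle s\rangle x$, $x\in G$, with one edge labeled $g$ between $\langle s\rangle x$ and $\langle t\rangle y$ ($s,t$ distinct members of $S$) for each $g\in\langle s\rangle x\cap\langle t\rangle y$, and no other edges; a $G$-graph is a multigraph isomorphic (ignoring labels) to some $\Phi(G,S)$. *)

(* Defs.v *)
From mathcomp Require Import all_boot all_fingroup.
Set Implicit Arguments. Unset Strict Implicit. Unset Printing Implicit Defensive.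
Import GroupScope.
Local Open Scope group_scope.

(* Vertices: inl a = vertex a of K_n; inr e = edge e of K_n (a 2-subset). *)
Definition IK_vert (n : nat) := ('I_n + {set 'I_n})%type.

Definition IK_valid (n : nat) (v : IK_vert n) : bool :=
  match v with inl _ => true | inr e => #|e| == 2 end.

Definition IK_mult (n : nat) (u v : IK_vert n) : nat :=
  match u, v with
  | inl a, inr e => a \in e
  | inr e, inl a => a \in e
  | _, _ => false
  end.

(* G is the finite group gT (whole group), S a multiset given as a sequence
   (listing members with multiplicity; order irrelevant).  A vertex is a pair
   (i, C) where i indexes a member s_i of S and C is a right coset <s_i> x;
   the vertex set is the disjoint union over members of S. *)
Definition Phi_vert (gT : finGroupType) (S : seq gT)
    (w : 'I_(size S) * {set gT}) : bool :=
  w.2 \in rcosets <[nth 1 S w.1]> [set: gT].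

Definition Phi_mult (gT : finGroupType) (S : seq gT)
    (w w' : 'I_(size S) * {set gT}) : nat :=
  if w.1 != w'.1 then #|w.2 :&: w'.2| else 0.

Definition IK_iso_Phi (n : nat) (gT : finGroupType) (S : seq gT) : Prop :=
  exists f : IK_vert n -> 'I_(size S) * {set gT},
    [/\ {in IK_valid (n:=n) &, injective f},
        (forall v, IK_valid v -> Phi_vert (f v)),
        (forall w, Phi_vert w -> exists2 v, IK_valid v & f v = w) &
        {in IK_valid (n:=n) &, forall u v, Phi_mult (f u) (f v) = IK_mult u v}].

Definition IK_is_G_graph (n : nat) : Prop :=
  exists (gT : finGroupType) (S : seq gT), IK_iso_Phi n S.

(* Main.v *)
Require Import Defs.
From mathcomp Require Import all_boot all_fingroup.
From mathcomp Require Import zify.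
Set Implicit Arguments. Unset Strict Implicit. Unset Printing Implicit Defensive.
Lemma two_ord k (x y z : 'I_k) : k <= 2 -> x != y -> y != z -> x = z.
Proof.
move=> k2; rewrite -!(inj_eq val_inj) => xy yz; apply/val_inj.
move: xy yz; case: x y z => [x ?] [y ?] [z ?] /=; lia.
Qed.

Lemma oddC2 n : n %% 4 = 2 -> odd 'C(n, 2).
Proof.
move=> n4; rewrite bin2 (divn_eq n 4) n4.
move: (n %/ 4) => q.
have -> : (q * 4 + 2) * (q * 4 + 2).-1 = (2 * (4 * q * q + 3 * q) + 1).*2.
  rewrite -mul2n (_ : (q * 4 + 2).-1 = q * 4 + 1); [nia | lia].
by rewrite doubleK addn1 /= oddM.
Qed.

Import GroupScope.
Local Open Scope group_scope.
Section Par.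
Variable gT : finGroupType.
Implicit Types g h x y : gT.

Definition rperm g : {perm gT} := perm (mulIg g).
Definition phi g := odd_perm (rperm g).

Lemma rpermM g h : rperm (g * h) = rperm g * rperm h.
Proof. by apply/permP => x; rewrite permM !permE /= mulgA. Qed.

Lemma phiM g h : phi (g * h) = phi g (+) phi h.
Proof. by rewrite /phi rpermM odd_permM. Qed.

Lemma rpermX g k x : (rperm g ^+ k) x = x * g ^+ k.
Proof.
elim: k => [|k IH]; first by rewrite !expg0 perm1 mulg1.
by rewrite expgSr permM IH permE /= expgSr mulgA.
Qed.

Lemma porbit_rperm g x : porbit (rperm g) x = x *: <[g]>.
Proof.
apply/setP => y; apply/porbitP/lcosetP.
  by case=> k ->; exists (g ^+ k); rewrite ?mem_cycle // rpermX.
by case=> z /cycleP [k ->] ->; exists k; rewrite rpermX.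
Qed.

Lemma porbitsE g : porbits (rperm g) = lcosets <[g]> [set: gT].
Proof.
apply/eqP; rewrite eqEsubset; apply/andP; split; apply/subsetP => C /imsetP [x _ ->].
  by rewrite porbit_rperm -lcosetE; apply: imset_f; rewrite inE.
by rewrite lcosetE -porbit_rperm; apply: imset_f.
Qed.

Lemma phiE g : phi g = odd #|gT| (+) odd #|[set: gT] : <[g]>|.
Proof. by rewrite /phi /odd_perm porbitsE card_lcosets. Qed.

Lemma phi1 : phi 1 = false.
Proof. by rewrite /phi (_ : rperm 1 = 1) ?odd_perm1 //; apply/permP=> x; rewrite permE perm1 /= mulg1. Qed.

Lemma phiX g k : phi g = false -> phi (g ^+ k) = false.
Proof. by move=> H; elim: k => [|k IH]; rewrite ?expg0 ?phi1 // expgS phiM H IH. Qed.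

Lemma phi_coset s x y : phi s = false -> y \in <[s]> :* x -> phi y = phi x.
Proof.
move=> H /rcosetP [z /cycleP [k ->] ->]; by rewrite phiM phiX.
Qed.
End Par.

Theorem corollary3 (n : nat) : 2 < n -> n %% 4 = 2 -> ~ IK_is_G_graph n.
Proof.
move=> n2 n4 [gT [S [f [finj fv fs fm]]]].
have n0 : 0 < n by lia.
have n1 : 1 < n by lia.
pose a0 := Ordinal n0; pose a1 := Ordinal n1; pose a2 := Ordinal n2.
have k2 : size S <= 2.
  rewrite leqNgt; apply/negP => k3.
  have k0 : 0 < size S by lia.
  have k1 : 1 < size S by lia.
  pose w (i : 'I_(size S)) := (i, <[nth 1 S i]> :* 1).
  have wv i : Phi_vert (w i).
    by rewrite /Phi_vert /= -rcosetE; apply: imset_f; rewrite inE.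
  have tri i j : i != j -> 0 < Phi_mult (w i) (w j).
    move=> ij; rewrite /Phi_mult /= ij; apply/card_gt0P; exists 1.
    by rewrite inE !rcoset1 !group1.
  have [v0 v0v fv0] := fs _ (wv (Ordinal k0)).
  have [v1 v1v fv1] := fs _ (wv (Ordinal k1)).
  have [v2 v2v fv2] := fs _ (wv (Ordinal k3)).
  have h01 := tri (Ordinal k0) (Ordinal k1) isT.
  have h02 := tri (Ordinal k0) (Ordinal k3) isT.
  have h12 := tri (Ordinal k1) (Ordinal k3) isT.
  rewrite -fv0 -fv1 fm // in h01; rewrite -fv0 -fv2 fm // in h02.
  rewrite -fv1 -fv2 fm // in h12.
  by move: h01 h02 h12; case: v0 {v0v fv0} => ?; case: v1 {v1v fv1} => ?;
    case: v2 {v2v fv2} => ?.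
have Mle (a : 'I_n) (e : {set 'I_n}) : #|e| == 2 -> Phi_mult (f (inl a)) (f (inr e)) = nat_of_bool (a \in e).
  by move=> ev; rewrite fm.
have Nadj (a : 'I_n) (e : {set 'I_n}) : #|e| == 2 -> a \in e -> (f (inl a)).1 != (f (inr e)).1.
  move=> ev ae; apply/negP => /eqP E; have := Mle a e ev.
  by rewrite /Phi_mult E eqxx ae.
pose i := (f (inl a0)).1.
pose e01 := [set a0; a1].
have e01v : #|e01| == 2 by rewrite cards2.
pose j := (f (inr e01)).1.
have ij : i != j by apply: Nadj; rewrite // !inE eqxx.
have tyl a : (f (inl a)).1 = i.
  have [-> //|na] := eqVneq a a0.
  have ev : #|[set a0; a]| == 2 by rewrite cards2 (eq_sym a0) na.
  apply: (@two_ord _ _ (f (inr [set a0; a])).1) => //.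
    by apply: Nadj; rewrite // !inE eqxx orbT.
  by rewrite eq_sym; apply: Nadj; rewrite // !inE eqxx.
have tyr (e : {set 'I_n}) : #|e| == 2 -> (f (inr e)).1 = j.
  move=> ev; have : 0 < #|e| by rewrite (eqP ev).
  case/card_gt0P => a ae.
  apply: (@two_ord _ _ i) => //.
  by rewrite eq_sym -(tyl a); apply: Nadj.
have Mc (a : 'I_n) (e : {set 'I_n}) : #|e| == 2 -> #|(f (inl a)).2 :&: (f (inr e)).2| = nat_of_bool (a \in e).
  by move=> ev; rewrite -Mle // /Phi_mult tyl tyr // ij.
pose Hi := <[nth 1 S i]>.
pose Hj := <[nth 1 S j]>.
have Pi g : exists a, (f (inl a)).2 = Hi :* g.
  have : Phi_vert (i, Hi :* g) by rewrite /Phi_vert /= -rcosetE; apply: imset_f; rewrite inE.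
  case/fs => [[a|e]] vv E; first by exists a; rewrite E.
  by move: (tyr e vv); rewrite E /= => ji; rewrite ji eqxx in ij.
have Pj g : exists2 e : {set 'I_n}, #|e| == 2 & (f (inr e)).2 = Hj :* g.
  have : Phi_vert (j, Hj :* g) by rewrite /Phi_vert /= -rcosetE; apply: imset_f; rewrite inE.
  case/fs => [[a|e]] vv E; last by exists e; rewrite // E.
  by move: (tyl a); rewrite E /= => ji; rewrite ji eqxx in ij.
have Cl a : exists x, (f (inl a)).2 = Hi :* x.
  have := fv (inl a) isT; rewrite /Phi_vert tyl.
  by case/imsetP => x _ ->; exists x; rewrite rcosetE.
have Cr (e : {set 'I_n}) : #|e| == 2 -> exists x, (f (inr e)).2 = Hj :* x.
  move=> ev; have := fv (inr e) ev; rewrite /Phi_vert tyr //.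
  by case/imsetP => x _ ->; exists x; rewrite rcosetE.
have Cinjl a b : (f (inl a)).2 = (f (inl b)).2 -> a = b.
  move=> E; have : f (inl a) = f (inl b).
    by rewrite [f (inl a)]surjective_pairing [f (inl b)]surjective_pairing !tyl E.
  by move/finj => /(_ isT isT) [].
have Cinjr (e e' : {set 'I_n}) : #|e| == 2 -> #|e'| == 2 -> (f (inr e)).2 = (f (inr e')).2 -> e = e'.
  move=> ev ev' E; have : f (inr e) = f (inr e').
    by rewrite [f (inr e)]surjective_pairing [f (inr e')]surjective_pairing !tyr // E.
  by move/finj => /(_ ev ev') [].
have cardi : #|[set: gT] : Hi| = n.
  have E : rcosets Hi [set: gT] = [set (f (inl a)).2 | a : 'I_n].
    apply/eqP; rewrite eqEsubset; apply/andP; split; apply/subsetP => C.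
      case/imsetP => x _ ->; have [a Ha] := Pi x.
      by rewrite rcosetE -Ha; apply: imset_f.
    case/imsetP => a _ ->; have [x ->] := Cl a.
    by rewrite -rcosetE; apply: imset_f; rewrite inE.
  rewrite /indexg E.
  by rewrite card_imset ?card_ord // => a b /Cinjl.
have cardj : #|[set: gT] : Hj| = 'C(n, 2).
  have E : rcosets Hj [set: gT] =
      [set (f (inr e)).2 | e in [set e : {set 'I_n} | #|e| == 2]].
    apply/eqP; rewrite eqEsubset; apply/andP; split; apply/subsetP => C.
      case/imsetP => x _ ->; have [e ev He] := Pj x.
      by rewrite rcosetE -He; apply: imset_f; rewrite inE.
    case/imsetP => e; rewrite inE => ev ->; have [x ->] := Cr e ev.
    by rewrite -rcosetE; apply: imset_f; rewrite inE.
  rewrite /indexg E card_in_imset ?card_draws ?card_ord // => e e'.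
  by rewrite !inE => ev ev' /Cinjr; apply.
have ne : odd n = false by rewrite (divn_eq n 4) n4 oddD oddM andbF.
have oG : odd #|gT| = false.
  by rewrite -cardsT -(Lagrange (subsetT Hi)) cardi oddM ne andbF.
have phii : phi (nth 1 S i) = false by rewrite phiE oG cardi ne.
have phij : phi (nth 1 S j) = true by rewrite phiE oG cardj oddC2.
have claim a b x y : a != b -> x \in (f (inl a)).2 -> y \in (f (inl b)).2 ->
    phi x != phi y.
  move=> ab xa yb.
  pose e := [set a; b].
  have ev : #|e| == 2 by rewrite cards2 ab.
  have := Mc a e ev; rewrite !inE eqxx /= => /eqP /cards1P [g Eg].
  have gA : g \in (f (inl a)).2 :&: (f (inr e)).2 by rewrite Eg set11.
  rewrite inE in gA; case/andP: gA => gCa gD.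
  have [y0 Ey0] := Cr e ev.
  have DE : (f (inr e)).2 = Hj :* g.
    by rewrite Ey0; apply/esym/rcoset_eqP; rewrite -Ey0.
  have hD : nth 1 S j * g \in (f (inr e)).2.
    by rewrite DE; apply/rcosetP; exists (nth 1 S j); rewrite ?cycle_id.
  have [c Ec] := Pi (nth 1 S j * g).
  have hC : nth 1 S j * g \in (f (inl c)).2 by rewrite Ec rcoset_refl.
  have : 0 < #|(f (inl c)).2 :&: (f (inr e)).2|.
    by apply/card_gt0P; exists (nth 1 S j * g); rewrite inE hC hD.
  rewrite Mc // lt0b !inE => /orP [/eqP ca | /eqP cb].
    have : nth 1 S j * g \in [set g] by rewrite -Eg inE -{1}ca hC hD.
    rewrite inE -{2}[g]mul1g => /eqP /mulIg sj1.
    have := Mc b e ev; rewrite !inE eqxx orbT => /eqP /cards1P [z Ez].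
    have : z \in (f (inl b)).2 :&: (f (inr e)).2 by rewrite Ez set11.
    rewrite inE DE => /andP [zb /rcosetP [h]].
    rewrite /Hj sj1 cycle1 inE => /eqP -> zg.
    rewrite mul1g in zg; subst z.
    have [xa' Ea] := Cl a; have [xb' Eb] := Cl b.
    have : (f (inl a)).2 = (f (inl b)).2.
      rewrite Ea Eb; rewrite Ea in gCa; rewrite Eb in zb.
      by rewrite -(rcoset_eqP gCa) -(rcoset_eqP zb).
    by move/Cinjl => abE; rewrite abE eqxx in ab.
  have [xa' Ea] := Cl a; have [xb' Eb] := Cl b.
  rewrite Ea in xa gCa; rewrite cb Eb in hC; rewrite Eb in yb.
  rewrite (phi_coset phii xa) -(phi_coset phii gCa).
  rewrite (phi_coset phii yb) -(phi_coset phii hC) phiM phij.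
  by case: (phi g).
have [x0 E0] := Cl a0; have [x1 E1] := Cl a1; have [x2 E2] := Cl a2.
have m0 : x0 \in (f (inl a0)).2 by rewrite E0 rcoset_refl.
have m1 : x1 \in (f (inl a1)).2 by rewrite E1 rcoset_refl.
have m2 : x2 \in (f (inl a2)).2 by rewrite E2 rcoset_refl.
have := claim a0 a1 x0 x1 isT m0 m1; have := claim a0 a2 x0 x2 isT m0 m2.
have := claim a1 a2 x1 x2 isT m1 m2.
by case: (phi x0); case: (phi x1); case: (phi x2).
Qed.
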